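(* Suppose Assumptions A1, A3 and A4 hold. Let $\{w_k\}$ be generated by $w_{k+1}=w_k+p_k$, where $|S_k|=\beta$ and $p_k$ is any vector satisfying the residual condition $$\|\nabla^2R_{S_k}(w_k)p_k+\nabla R(w_k)\|\le\zeta\|\nabla R(w_k)\|$$ for a parameter $\zeta<1$. Then $$\mathbb{E}_k[\|w_{k+1}-w^*\|]\le\frac{M}{2\mu_\beta}\|w_k-w^*\|^2+\left(\frac{\sigma}{\mu_\beta\sqrt\beta}+\frac{L\zeta}{\mu_\beta}\right)\|w_k-w^*\|.$$ Consequently, if in addition Assumption B1 holds, $\beta\ge 64\sigma^2/\bar\mu^2$, $\zeta\le\frac{\mu_\beta}{8L}$, and $\|w_0-w^*\|\le\min\{\frac1{4C_1},\frac1{4\gamma C_1}\}$ with $C_1=\frac M{2\mu_\beta}$, then $\mathbb{E}[\|w_{k+1}-w^*\|]\le\frac12\mathbb{E}[\|w_k-w^*\|]$ for all $k\ge0$.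
   Context: Setting (finite sum): $R(w)=\frac1N\sum_{i=1}^NF_i(w)$ for $w\in\mathbb{R}^d$, each $F_i$ twice continuously differentiable. For an index multiset $S$, $\nabla^2R_S(w)=\frac1{|S|}\sum_{i\in S}\nabla^2F_i(w)$. At each iteration $S_k$ consists of $\beta$ indices drawn independently and uniformly from $\{1,\dots,N\}$, independent of the past; the full gradient $\nabla R(w_k)$ is used. $\mathbb{E}_k$ is expectation over $S_k$ conditional on $w_k$. $w^*$ is the unique minimizer of $R$. Assumption A1 (for $R$): for every positive integer $\beta$ there are $0<\mu_\beta\le L_\beta$ with $\mu_\beta I\preceq\nabla^2R_S(w)\preceq L_\beta I$ for all $w$ and all $|S|=\beta$; constants $0<\bar\mu\le\mu_\beta$, $L_\beta\le\bar L<\infty$; and $\mu I\preceq\nabla^2R(w)\preceq LI$ for all $w$. Assumption A3: $\|\nabla^2R(w)-\nabla^2R(z)\|\le M\|w-z\|$ for all $w,z$. Assumption A4: with $i$ uniform on $\{1,\dots,N\}$, $\|\mathbb{E}[(\nabla^2F_i(w)-\nabla^2R(w))^2]\|\le\sigma^2$ for all $w$. Assumption B1: there is $\gamma>0$ such that every iterate satisfies $\mathbb{E}[\|w_k-w^*\|^2]\le\gamma(\mathbb{E}[\|w_k-w^*\|])^2$. *)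

(* Defs.v *)
From Stdlib Require Import Reals.
From mathcomp Require Import all_boot.

Set Implicit Arguments.
Unset Strict Implicit.
Unset Printing Implicit Defensive.

Local Open Scope R_scope.

Definition vec (d : nat) := 'I_d -> R.
Definition mat (d : nat) := 'I_d -> 'I_d -> R.

Definition rsum (n : nat) (f : 'I_n -> R) : R := \big[Rplus/0]_(i < n) f i.

Definition vadd d (u v : vec d) : vec d := fun i => u i + v i.
Definition vsub d (u v : vec d) : vec d := fun i => u i - v i.
Definition dot d (u v : vec d) : R := rsum (fun i => u i * v i).
Definition vnorm d (v : vec d) : R := sqrt (dot v v).

Definition mv d (A : mat d) (v : vec d) : vec d :=
  fun i => rsum (fun j => A i j * v j).
Definition mmul d (A B : mat d) : mat d :=
  fun i k => rsum (fun j => A i j * B j k).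
Definition msub d (A B : mat d) : mat d := fun i j => A i j - B i j.

Definition opnorm_le d (A : mat d) (c : R) : Prop :=
  forall x : vec d, vnorm (mv A x) <= c * vnorm x.

Definition loewner_between d (m L : R) (A : mat d) : Prop :=
  forall x : vec d, m * dot x x <= dot x (mv A x) <= L * dot x x.

Definition has_gradient d (f : vec d -> R) (g : vec d -> vec d) : Prop :=
  forall (w : vec d) (eps : R), 0 < eps -> exists delta, 0 < delta /\
    forall h : vec d, vnorm h < delta ->
      Rabs (f (vadd w h) - f w - dot (g w) h) <= eps * vnorm h.

Definition has_jacobian d (g : vec d -> vec d) (H : vec d -> mat d) : Prop :=
  forall (w : vec d) (eps : R), 0 < eps -> exists delta, 0 < delta /\
    forall h : vec d, vnorm h < delta ->
      vnorm (vsub (vsub (g (vadd w h)) (g w)) (mv (H w) h)) <= eps * vnorm h.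

Definition mat_continuous d (H : vec d -> mat d) : Prop :=
  forall (w : vec d) (eps : R), 0 < eps -> exists delta, 0 < delta /\
    forall z : vec d, vnorm (vsub z w) < delta ->
      forall i j, Rabs (H z i j - H w i j) < eps.

Definition is_C2 d (f : vec d -> R) (g : vec d -> vec d) (H : vec d -> mat d)
  : Prop := has_gradient f g /\ has_jacobian g H /\ mat_continuous H.

Definition avgN (N : nat) (f : 'I_N -> R) : R := / INR N * rsum f.

Definition Robj N d (F : 'I_N -> vec d -> R) (w : vec d) : R :=
  avgN (fun i => F i w).
Definition gradR N d (gF : 'I_N -> vec d -> vec d) (w : vec d) : vec d :=
  fun a => avgN (fun i => gF i w a).
Definition hessR N d (HF : 'I_N -> vec d -> mat d) (w : vec d) : mat d :=
  fun a b => avgN (fun i => HF i w a b).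

Definition hessS N d beta (HF : 'I_N -> vec d -> mat d)
  (S : beta.-tuple 'I_N) (w : vec d) : mat d :=
  fun a b => / INR beta * rsum (fun j : 'I_beta => HF (tnth S j) w a b).

Definition hess_var N d (HF : 'I_N -> vec d -> mat d) (w : vec d) : mat d :=
  fun a b => avgN (fun i =>
    mmul (msub (HF i w) (hessR HF w)) (msub (HF i w) (hessR HF w)) a b).

(* Expectation over S = beta indices drawn i.i.d. uniformly from 'I_N *)
Definition sample_exp N beta (X : beta.-tuple 'I_N -> R) : R :=
  / (INR N ^ beta) * \big[Rplus/0]_(S : beta.-tuple 'I_N) X S.

(* Sample histories are stored most-recent-first: S_{k-1} :: ... :: S_0.
   The step p_k may depend on the whole past history and on S_k. *)
Fixpoint iterate N d beta (w0 : vec d)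
  (p : seq (beta.-tuple 'I_N) -> beta.-tuple 'I_N -> vec d)
  (h : seq (beta.-tuple 'I_N)) : vec d :=
  match h with
  | [::] => w0
  | Sk :: h1 => vadd (iterate w0 p h1) (p h1 Sk)
  end.

(* Total expectation of X(S_{k-1},...,S_0) over the i.i.d. samples S_0..S_{k-1} *)
Fixpoint full_exp N beta (k : nat) (X : seq (beta.-tuple 'I_N) -> R) : R :=
  match k with
  | O => X [::]
  | k'.+1 => full_exp k' (fun h => sample_exp (fun S => X (S :: h)))
  end.

(* Main.v *)
Require Import Defs.
From Stdlib Require Import Reals Lra FunctionalExtensionality.
From mathcomp Require Import all_boot all_algebra.
From mathcomp Require Import Rstruct.
Import GRing.Theory Num.Theory.
Set Implicit Arguments.
Unset Strict Implicit.
Local Open Scope R_scope.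

Lemma rsum_ext n (f g : 'I_n -> R) : (forall i, f i = g i) -> rsum f = rsum g.
Proof. move=> H; rewrite /rsum; apply: eq_bigr => i _; exact: H. Qed.
Lemma rsum_add n (f g : 'I_n -> R) : rsum (fun i => f i + g i) = rsum f + rsum g.
Proof. rewrite /rsum. exact: big_split. Qed.
Lemma rsum_scal n c (f : 'I_n -> R) : rsum (fun i => c * f i) = c * rsum f.
Proof. rewrite /rsum. by rewrite -mulr_sumr. Qed.
Lemma rsum_scalr n c (f : 'I_n -> R) : rsum (fun i => f i * c) = rsum f * c.
Proof. rewrite Rmult_comm -rsum_scal; apply: rsum_ext => i; ring. Qed.
Lemma rsum_opp n (f : 'I_n -> R) : rsum (fun i => - f i) = - rsum f.
Proof. rewrite -(rsum_ext (f := fun i => -1 * f i)); last by move=> i; ring.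
rewrite rsum_scal; ring. Qed.
Lemma rsum_sub n (f g : 'I_n -> R) : rsum (fun i => f i - g i) = rsum f - rsum g.
Proof. rewrite /Rminus -rsum_opp -rsum_add //. Qed.
Lemma rsum_zero n : rsum (fun _ : 'I_n => 0) = 0.
Proof. rewrite /rsum. exact: big1. Qed.
Lemma rsum_const n c : rsum (fun _ : 'I_n => c) = INR n * c.
Proof. rewrite /rsum big_const_ord. elim: n => [|n IH]; first by rewrite /=; ring.
rewrite iterS IH S_INR; ring. Qed.
Lemma rsum_le n (f g : 'I_n -> R) : (forall i, f i <= g i) -> rsum f <= rsum g.
Proof. move=> H; rewrite /rsum; apply/RleP; apply: ler_sum => i _; apply/RleP; exact: H. Qed.
Lemma rsum_ge0 n (f : 'I_n -> R) : (forall i, 0 <= f i) -> 0 <= rsum f.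
Proof. move=> H; rewrite -(rsum_zero n); exact: rsum_le. Qed.
Lemma rsum_exchange n m (f : 'I_n -> 'I_m -> R) :
  rsum (fun i => rsum (fun j => f i j)) = rsum (fun j => rsum (fun i => f i j)).
Proof. rewrite /rsum. exact: exchange_big. Qed.
Lemma rsum_recr n (f : 'I_n.+1 -> R) :
  rsum f = rsum (fun i : 'I_n => f (widen_ord (leqnSn n) i)) + f ord_max.
Proof. rewrite /rsum big_ord_recr /=. done. Qed.
Lemma rsum_delta n (f : 'I_n -> R) a :
  rsum (fun i => (if i == a then 1 else 0) * f i) = f a.
Proof. rewrite /rsum (bigD1 a) //= eqxx big1 /=.
  - rewrite /GRing.add /=; ring.
  - move=> i /negbTE ->; rewrite /GRing.zero /=; ring. Qed.
Lemma rsum_delta' n (f : 'I_n -> R) a :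
  rsum (fun i => f i * (if i == a then 1 else 0)) = f a.
Proof. rewrite -(rsum_delta f a); apply: rsum_ext => i; ring. Qed.

Definition scal d (c : R) (v : vec d) : vec d := fun i => c * v i.

Section Vec.
Variable d : nat.
Implicit Types u v w : vec d.

Lemma dot_sym u v : dot u v = dot v u.
Proof. apply: rsum_ext => i; ring. Qed.
Lemma dot_addl u v w : dot (vadd u v) w = dot u w + dot v w.
Proof. rewrite /dot -rsum_add; apply: rsum_ext => i; rewrite /vadd; ring. Qed.
Lemma dot_addr u v w : dot w (vadd u v) = dot w u + dot w v.
Proof. rewrite /dot -rsum_add; apply: rsum_ext => i; rewrite /vadd; ring. Qed.
Lemma dot_subl u v w : dot (vsub u v) w = dot u w - dot v w.
Proof. rewrite /dot -rsum_sub; apply: rsum_ext => i; rewrite /vsub; ring. Qed.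
Lemma dot_subr u v w : dot w (vsub u v) = dot w u - dot w v.
Proof. rewrite /dot -rsum_sub; apply: rsum_ext => i; rewrite /vsub; ring. Qed.
Lemma dot_scall c u w : dot (scal c u) w = c * dot u w.
Proof. rewrite /dot -rsum_scal; apply: rsum_ext => i; rewrite /scal; ring. Qed.
Lemma dot_scalr c u w : dot w (scal c u) = c * dot w u.
Proof. rewrite /dot -rsum_scal; apply: rsum_ext => i; rewrite /scal; ring. Qed.
Lemma dot_ge0 v : 0 <= dot v v.
Proof. apply: rsum_ge0 => i; nra. Qed.
Lemma vnorm_ge0 v : 0 <= vnorm v.
Proof. exact: sqrt_pos. Qed.
Lemma vnorm_sq v : vnorm v * vnorm v = dot v v.
Proof. rewrite /vnorm sqrt_sqrt //; exact: dot_ge0. Qed.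
Lemma vnorm_sq2 v : vnorm v ^ 2 = dot v v.
Proof. rewrite -vnorm_sq; ring. Qed.

Lemma quad_disc a b c : 0 <= c -> (forall t, 0 <= a + 2 * b * t + c * (t * t)) -> b * b <= a * c.
Proof.
move=> Hc H.
case: (Rle_lt_or_eq_dec 0 c Hc) => Hc'.
- have := H (- b / c). 
  have -> : a + 2 * b * (- b / c) + c * (- b / c * (- b / c)) = a - b * b / c by field; lra.
  move=> H1.
  have : 0 <= (a - b * b / c) * c by apply: Rmult_le_pos; lra.
  have -> : (a - b * b / c) * c = a * c - b * b by field; lra.
  lra.
- rewrite -Hc'.
  case: (Req_dec b 0) => Hb; first by rewrite Hb; nra.
  have := H (- (Rabs a + 1) / (2 * b)).
  rewrite -Hc'.
  have -> : a + 2 * b * (- (Rabs a + 1) / (2 * b)) + 0 * (- (Rabs a + 1) / (2 * b) * (- (Rabs a + 1) / (2 * b))) = a - (Rabs a + 1) by field.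
  move=> H1. have := Rle_abs a. lra.
Qed.

Lemma cauchy_schwarz u v : Rabs (dot u v) <= vnorm u * vnorm v.
Proof.
have H : dot u v * dot u v <= dot u u * dot v v.
  apply: quad_disc; first exact: dot_ge0.
  move=> t. have := dot_ge0 (vadd u (scal t v)).
  rewrite dot_addl !dot_addr !dot_scall !dot_scalr (dot_sym v u). lra.
rewrite -(sqrt_Rsqr_abs (dot u v)) /vnorm -sqrt_mult; try exact: dot_ge0.
apply: sqrt_le_1_alt. rewrite /Rsqr. exact: H.
Qed.

Lemma dot_le_norm u v : dot u v <= vnorm u * vnorm v.
Proof. have := cauchy_schwarz u v; have := Rle_abs (dot u v); lra. Qed.

Lemma sqrt_le_of_sq x y : 0 <= y -> x <= y * y -> sqrt x <= y.
Proof. move=> Hy Hx. rewrite -(sqrt_square y) //. apply: sqrt_le_1_alt. lra. Qed.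

Lemma vnorm_le_of_sq v c : 0 <= c -> dot v v <= c * c -> vnorm v <= c.
Proof. move=> Hc H; exact: sqrt_le_of_sq. Qed.

Lemma vnorm_add u v : vnorm (vadd u v) <= vnorm u + vnorm v.
Proof.
apply: vnorm_le_of_sq; first by have := vnorm_ge0 u; have := vnorm_ge0 v; lra.
rewrite dot_addl !dot_addr (dot_sym v u) -(vnorm_sq u) -(vnorm_sq v).
have := dot_le_norm u v. nra.
Qed.

Lemma vnorm_scal c v : vnorm (scal c v) = Rabs c * vnorm v.
Proof.
rewrite /vnorm dot_scall dot_scalr -Rmult_assoc sqrt_mult; try nra; last exact: dot_ge0.
rewrite -(sqrt_Rsqr_abs c) /Rsqr //.
Qed.

Lemma vnorm_eq0 v : vnorm v = 0 -> forall i, v i = 0.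
Proof.
move=> H i. have H1 : dot v v = 0 by rewrite -vnorm_sq H; ring.
case: (Req_dec (v i) 0) => // Hi; exfalso.
have : v i * v i <= dot v v.
  rewrite /dot /rsum (bigD1 i) //=. 
  have : 0 <= \big[Rplus/0]_(j < d | j != i) (v j * v j).
    rewrite -big_filter; elim: (filter _ _) => [|x s IH]; rewrite ?big_nil ?big_cons; first by apply: Rle_refl.
    change (0 <= v x * v x + \big[Rplus/0]_(j <- s) (v j * v j)); nra.
  move=> Hr; rewrite /GRing.add /=; have := Rplus_le_compat_l (v i * v i) _ _ Hr; rewrite Rplus_0_r; exact.
have : 0 < v i * v i by nra.
lra.
Qed.

Lemma vsub_vadd_eq u v w : vsub (vadd u v) w = vadd (vsub u w) v.
Proof. apply: functional_extensionality => i; rewrite /vsub /vadd; ring. Qed.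

End Vec.

Section Mat.
Variable d : nat.
Implicit Types u v x : vec d.
Implicit Types A B : mat d.

Lemma mv_vadd A u v : mv A (vadd u v) = vadd (mv A u) (mv A v).
Proof. apply: functional_extensionality => i; rewrite /mv /vadd -rsum_add; apply: rsum_ext => j; ring. Qed.
Lemma mv_scal A c u : mv A (scal c u) = scal c (mv A u).
Proof. apply: functional_extensionality => i; rewrite /mv /scal -rsum_scal; apply: rsum_ext => j; ring. Qed.
Lemma mv_msub A B u : mv (msub A B) u = vsub (mv A u) (mv B u).
Proof. apply: functional_extensionality => i; rewrite /mv /vsub /msub -rsum_sub; apply: rsum_ext => j; ring. Qed.
Lemma mv_vsub A u v : mv A (vsub u v) = vsub (mv A u) (mv A v).
Proof. apply: functional_extensionality => i; rewrite /mv /vsub -rsum_sub; apply: rsum_ext => j; ring. Qed.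

Definition msym A := forall i j, A i j = A j i.

Lemma dot_mv_exp A u v : dot u (mv A v) = rsum (fun i => rsum (fun j => u i * A i j * v j)).
Proof. rewrite /dot /mv; apply: rsum_ext => i; rewrite -rsum_scal; apply: rsum_ext => j; ring. Qed.

Lemma dot_mv_sym A u v : msym A -> dot u (mv A v) = dot v (mv A u).
Proof.
move=> HA; rewrite !dot_mv_exp rsum_exchange; apply: rsum_ext => i; apply: rsum_ext => j.
rewrite HA; ring.
Qed.

Lemma psd_cs A u v : msym A -> (forall x, 0 <= dot x (mv A x)) ->
  dot u (mv A v) * dot u (mv A v) <= dot u (mv A u) * dot v (mv A v).
Proof.
move=> HA Hp; apply: quad_disc; first exact: Hp.
move=> t; have := Hp (vadd u (scal t v)).
rewrite mv_vadd mv_scal dot_addl !dot_addr !dot_scall !dot_scalr (dot_mv_sym v u HA).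
lra.
Qed.

Lemma loewner_opnorm A L x : msym A -> 0 <= L ->
  (forall x, 0 <= dot x (mv A x) <= L * dot x x) -> vnorm (mv A x) <= L * vnorm x.
Proof.
move=> HA HL Hx.
set y := mv A x.
have H1 : dot y (mv A x) = dot y y by [].
have H2 := psd_cs y x HA (fun z => proj1 (Hx z)).
rewrite H1 in H2.
have Hy := Hx y. have Hxx := Hx x.
have Hyy := dot_ge0 y. have Hx0 := dot_ge0 x.
have H3 : dot y y * dot y y <= (L * dot y y) * (L * dot x x).
  apply: Rle_trans H2 _. apply: Rmult_le_compat; lra.
apply: vnorm_le_of_sq; first by have := vnorm_ge0 x; nra.
have -> : L * vnorm x * (L * vnorm x) = L * L * dot x x by rewrite -vnorm_sq; ring.
case: (Req_dec (dot y y) 0) => Hy0; first by rewrite Hy0; nra.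
have Hyp : 0 < dot y y by lra.
apply: (Rmult_le_reg_l (dot y y)) => //. nra.
Qed.

Lemma loewner_lower A m x : (forall x, m * dot x x <= dot x (mv A x)) -> m * vnorm x <= vnorm (mv A x).
Proof.
move=> H. have H1 := H x. have H2 := dot_le_norm x (mv A x).
rewrite -vnorm_sq in H1.
have Hx := vnorm_ge0 x. have Hy := vnorm_ge0 (mv A x).
case: (Req_dec (vnorm x) 0) => H0; first by rewrite H0; lra.
have Hp : 0 < vnorm x by lra.
apply: (Rmult_le_reg_l (vnorm x)) => //. nra.
Qed.

End Mat.

Lemma deriv_from_bound (f : R -> R) x l :
  (forall eps, 0 < eps -> exists delta, 0 < delta /\ forall h, Rabs h < delta ->
     Rabs (f (x + h) - f x - h * l) <= eps * Rabs h) ->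
  derivable_pt_lim f x l.
Proof.
move=> H eps Heps.
have [delta [Hd Hb]] := H (eps / 2) ltac:(lra).
exists (mkposreal delta Hd) => h Hh Hhd /=.
have Hah : 0 < Rabs h by apply: Rabs_pos_lt.
have -> : (f (x + h) - f x) / h - l = (f (x + h) - f x - h * l) / h by field.
rewrite /Rdiv Rabs_mult Rabs_inv.
have := Hb h Hhd.
move=> Hbh.
apply: (Rmult_lt_reg_r (Rabs h)) => //.
rewrite Rmult_assoc Rinv_l; last lra.
nra.
Qed.

Lemma dpl_ext (f g : R -> R) x l : (forall t, f t = g t) -> derivable_pt_lim f x l -> derivable_pt_lim g x l.
Proof. move=> H; have -> : g = f by apply: functional_extensionality => t; rewrite H. done. Qed.

Lemma dpl_quad a b c x : derivable_pt_lim (fun t => a + b * t + c * (t * t)) x (b + 2 * c * x).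
Proof.
apply: deriv_from_bound => eps Heps.
exists (eps / (Rabs c + 1)); split; first by have := Rabs_pos c => ?; apply: Rdiv_lt_0_compat; lra.
move=> h Hh.
have -> : a + b * (x + h) + c * ((x + h) * (x + h)) - (a + b * x + c * (x * x)) - h * (b + 2 * c * x) = c * h * h by ring.
rewrite !Rabs_mult.
have Hc := Rabs_pos c. have Ha := Rabs_pos h.
have H1 : Rabs h * (Rabs c + 1) < eps.
  have := Rmult_lt_compat_r (Rabs c + 1) _ _ ltac:(lra) Hh.
  rewrite /Rdiv Rmult_assoc Rinv_l; lra.
nra.
Qed.

Lemma dpl_plus (f g : R -> R) x l1 l2 : derivable_pt_lim f x l1 -> derivable_pt_lim g x l2 ->
  derivable_pt_lim (fun t => f t + g t) x (l1 + l2).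
Proof. move=> H1 H2; exact: (derivable_pt_lim_plus f g x l1 l2 H1 H2). Qed.
Lemma dpl_minus (f g : R -> R) x l1 l2 : derivable_pt_lim f x l1 -> derivable_pt_lim g x l2 ->
  derivable_pt_lim (fun t => f t - g t) x (l1 - l2).
Proof. move=> H1 H2; exact: (derivable_pt_lim_minus f g x l1 l2 H1 H2). Qed.
Lemma dpl_scal (f : R -> R) a x l : derivable_pt_lim f x l ->
  derivable_pt_lim (fun t => a * f t) x (a * l).
Proof. move=> H1; exact: (derivable_pt_lim_scal f a x l H1). Qed.

Lemma dpl_rsum n (f : 'I_n -> R -> R) (l : 'I_n -> R) x :
  (forall i, derivable_pt_lim (f i) x (l i)) ->
  derivable_pt_lim (fun s => rsum (fun i => f i s)) x (rsum l).
Proof.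
elim: n f l => [|n IH] f l H.
  have E : forall (g : 'I_0 -> R), rsum g = 0 by move=> g; rewrite /rsum big_ord0.
  rewrite E; apply: (dpl_ext (f := fct_cte 0)); first by move=> t; rewrite E.
  exact: derivable_pt_lim_const.
rewrite rsum_recr.
apply: (dpl_ext (f := fun s => rsum (fun i : 'I_n => f (widen_ord (leqnSn n) i) s) + f ord_max s)).
  by move=> t; rewrite rsum_recr.
apply: dpl_plus; last exact: H.
apply: (IH (fun i => f (widen_ord (leqnSn n) i))) => i; exact: H.
Qed.

Lemma deriv_min0 (f : R -> R) x l : derivable_pt_lim f x l -> (forall y, f x <= f y) -> l = 0.
Proof.
move=> H Hm.
case: (Rtotal_order l 0) => [Hl|[Hl|Hl]] //; exfalso.
- have [[delta Hd] Hb] := H (- l / 2) ltac:(lra).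
  set h := delta / 2.
  have Hh : h <> 0 by rewrite /h; simpl in *; lra.
  have Hh2 : Rabs h < delta by rewrite /h Rabs_right; simpl in *; lra.
  have := Hb h Hh Hh2. simpl.
  have := Hm (x + h).
  move=> H1 H2.
  have H3 := Rabs_def2 _ _ H2.
  have H4 : (f (x + h) - f x) / h < l / 2 by lra.
  have Hhp : 0 < h by rewrite /h; lra.
  have : (f (x + h) - f x) / h >= 0.
    apply: Rle_ge; apply: Rmult_le_pos; first lra. left; exact: Rinv_0_lt_compat.
  lra.
- have [[delta Hd] Hb] := H (l / 2) ltac:(lra).
  set h := - (delta / 2).
  have Hh : h <> 0 by rewrite /h; simpl in *; lra.
  have Hh2 : Rabs h < delta by rewrite /h Rabs_left; simpl in *; lra.
  have := Hb h Hh Hh2. simpl.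
  have := Hm (x + h).
  move=> H1 H2.
  have H3 := Rabs_def2 _ _ H2.
  have H4 : (f (x + h) - f x) / h > l / 2 by lra.
  have Hhp : h < 0 by rewrite /h; lra.
  have : (f (x + h) - f x) / h <= 0.
    rewrite /Rdiv. have := Rinv_lt_0_compat _ Hhp. nra.
  lra.
Qed.

Definition line d (w v : vec d) (s : R) : vec d := vadd w (scal s v).

Lemma line_add d (w v : vec d) s h : line w v (s + h) = vadd (line w v s) (scal h v).
Proof. apply: functional_extensionality => i; rewrite /line /vadd /scal; ring. Qed.

Lemma ratio_le1 a : 0 <= a -> a / (a + 1) <= 1.
Proof. move=> Ha. apply: (Rmult_le_reg_r (a + 1)); first lra.
rewrite /Rdiv Rmult_assoc Rinv_l; lra. Qed.

Lemma grad_path d (F : vec d -> R) g w v s0 : has_gradient F g ->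
  derivable_pt_lim (fun s => F (line w v s)) s0 (dot (g (line w v s0)) v).
Proof.
move=> Hg; apply: deriv_from_bound => eps Heps.
set z := line w v s0. set nv := vnorm v.
have Hnv : 0 <= nv := vnorm_ge0 v.
have [del [Hdel Hb]] := Hg z (eps / (nv + 1)) ltac:(apply: Rdiv_lt_0_compat; lra).
exists (del / (nv + 1)); split; first by apply: Rdiv_lt_0_compat; lra.
move=> h Hh. rewrite line_add -/z.
have Hah := Rabs_pos h.
have H1 : Rabs h * (nv + 1) < del.
  have := Rmult_lt_compat_r (nv + 1) _ _ ltac:(lra) Hh.
  rewrite /Rdiv Rmult_assoc Rinv_l; lra.
have Hn : vnorm (scal h v) < del by rewrite vnorm_scal -/nv; nra.
have := Hb _ Hn. rewrite dot_scalr vnorm_scal -/nv => H2.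
apply: Rle_trans H2 _.
have := ratio_le1 Hnv. 
have -> : eps / (nv + 1) * (Rabs h * nv) = eps * Rabs h * (nv / (nv + 1)) by field; lra.
have : 0 <= eps * Rabs h by nra.
nra.
Qed.

Lemma jac_path d (g : vec d -> vec d) H u w v s0 : has_jacobian g H ->
  derivable_pt_lim (fun s => dot u (g (line w v s))) s0 (dot u (mv (H (line w v s0)) v)).
Proof.
move=> Hg; apply: deriv_from_bound => eps Heps.
set z := line w v s0. set nv := vnorm v. set nu := vnorm u.
have Hnv : 0 <= nv := vnorm_ge0 v.
have Hnu : 0 <= nu := vnorm_ge0 u.
have [del [Hdel Hb]] := Hg z (eps / ((nu + 1) * (nv + 1))) ltac:(apply: Rdiv_lt_0_compat; nra).
exists (del / (nv + 1)); split; first by apply: Rdiv_lt_0_compat; lra.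
move=> h Hh. rewrite line_add -/z.
have Hah := Rabs_pos h.
have H1 : Rabs h * (nv + 1) < del.
  have := Rmult_lt_compat_r (nv + 1) _ _ ltac:(lra) Hh.
  rewrite /Rdiv Rmult_assoc Rinv_l; lra.
have Hn : vnorm (scal h v) < del by rewrite vnorm_scal -/nv; nra.
have := Hb _ Hn. rewrite vnorm_scal -/nv => H2.
have -> : dot u (g (vadd z (scal h v))) - dot u (g z) - h * dot u (mv (H z) v)
  = dot u (vsub (vsub (g (vadd z (scal h v))) (g z)) (mv (H z) (scal h v))).
  by rewrite !dot_subr mv_scal dot_scalr.
apply: Rle_trans (cauchy_schwarz _ _) _. rewrite -/nu.
set X := vnorm _ in H2 *.
have HX : 0 <= X := vnorm_ge0 _.
have H3 : nu * X <= nu * (eps / ((nu + 1) * (nv + 1)) * (Rabs h * nv)) by apply: Rmult_le_compat_l.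
apply: Rle_trans H3 _.
have -> : nu * (eps / ((nu + 1) * (nv + 1)) * (Rabs h * nv)) = eps * Rabs h * ((nu / (nu + 1)) * (nv / (nv + 1))) by field; lra.
have := ratio_le1 Hnv. have := ratio_le1 Hnu.
have : 0 <= nu / (nu + 1) by apply: Rmult_le_pos; [lra | left; apply: Rinv_0_lt_compat; lra].
have : 0 <= nv / (nv + 1) by apply: Rmult_le_pos; [lra | left; apply: Rinv_0_lt_compat; lra].
have : 0 <= eps * Rabs h by nra.
move=> A1 A2 A3 A4 A5.
have : (nu / (nu + 1)) * (nv / (nv + 1)) <= 1 by nra.
nra.
Qed.

Definition ev d (a : 'I_d) : vec d := fun k => if k == a then 1 else 0.

Lemma dot_evr d (X : vec d) a : dot X (ev a) = X a.
Proof. rewrite /dot /ev. exact: rsum_delta'. Qed.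
Lemma dot_evl d (X : vec d) a : dot (ev a) X = X a.
Proof. rewrite dot_sym. exact: dot_evr. Qed.
Lemma mv_ev d (A : mat d) a b : mv A (ev b) a = A a b.
Proof. rewrite /mv /ev. exact: rsum_delta'. Qed.
Lemma vnorm_ev d (a : 'I_d) : vnorm (ev a) = 1.
Proof. rewrite /vnorm dot_evr /ev eqxx. exact: sqrt_1. Qed.

Definition Pst d (w : vec d) a b s t := vadd (vadd w (scal s (ev a))) (scal t (ev b)).
Definition Dmix d (F : vec d -> R) w a b del :=
  F (Pst w a b del del) - F (Pst w a b del 0) - F (Pst w a b 0 del) + F (Pst w a b 0 0).

Lemma Pst_swap d (w : vec d) a b s t : Pst w a b s t = Pst w b a t s.
Proof. apply: functional_extensionality => i; rewrite /Pst /vadd /scal; ring. Qed.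

Lemma Dmix_swap d (F : vec d -> R) w a b del : Dmix F w a b del = Dmix F w b a del.
Proof. rewrite /Dmix !(Pst_swap w a b). ring. Qed.

Lemma mixed d (F : vec d -> R) g H w a b del : is_C2 F g H -> 0 < del ->
  exists xi eta, 0 < xi < del /\ 0 < eta < del /\
    Dmix F w a b del = del * del * H (Pst w a b xi eta) a b.
Proof.
move=> [Hg [HJ _]] Hdel.
have EP1 : forall s t, Pst w a b s t = line (vadd w (scal t (ev b))) (ev a) s.
  move=> s t; apply: functional_extensionality => i; rewrite /Pst /line /vadd /scal; ring.
have EP2 : forall s t, Pst w a b s t = line (vadd w (scal s (ev a))) (ev b) t.
  move=> s t; apply: functional_extensionality => i; rewrite /Pst /line /vadd /scal; ring.
pose phi s := F (Pst w a b s del) - F (Pst w a b s 0).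
pose phi' s := dot (g (Pst w a b s del)) (ev a) - dot (g (Pst w a b s 0)) (ev a).
have Hphi : forall c, 0 <= c <= del -> derivable_pt_lim phi c (phi' c).
  move=> c _. rewrite /phi /phi'.
  apply: (dpl_ext (f := fun s => F (line (vadd w (scal del (ev b))) (ev a) s) - F (line (vadd w (scal 0 (ev b))) (ev a) s))).
    by move=> t; rewrite !EP1.
  rewrite !EP1.
  apply: dpl_minus; exact: grad_path.
have [xi [Exi Hxi]] := MVT_cor2 phi phi' 0 del Hdel Hphi.
pose chi t := dot (ev a) (g (Pst w a b xi t)).
pose chi' t := H (Pst w a b xi t) a b.
have Hchi : forall c, 0 <= c <= del -> derivable_pt_lim chi c (chi' c).
  move=> c _. rewrite /chi /chi'.
  apply: (dpl_ext (f := fun t => dot (ev a) (g (line (vadd w (scal xi (ev a))) (ev b) t)))).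
    by move=> t; rewrite EP2.
  rewrite EP2 -mv_ev -dot_evl.
  exact: jac_path.
have [eta [Eeta Heta]] := MVT_cor2 chi chi' 0 del Hdel Hchi.
exists xi, eta; split; first lra. split; first lra.
have -> : Dmix F w a b del = phi del - phi 0 by rewrite /Dmix /phi; ring.
rewrite Exi.
have -> : phi' xi = chi del - chi 0 by rewrite /phi' /chi !(dot_sym (ev a)).
rewrite Eeta /chi'. ring.
Qed.

Lemma eq0_of_small x : (forall eps, 0 < eps -> Rabs x < eps) -> x = 0.
Proof.
move=> H. case: (Req_dec x 0) => // Hx; exfalso.
have Hp := Rabs_pos_lt x Hx. have := H _ Hp. lra.
Qed.

Lemma vnorm_Pst d (w : vec d) a b s t : 0 <= s -> 0 <= t -> vnorm (vsub (Pst w a b s t) w) <= s + t.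
Proof.
move=> Hs Ht.
have -> : vsub (Pst w a b s t) w = vadd (scal s (ev a)) (scal t (ev b)).
  apply: functional_extensionality => i; rewrite /Pst /vsub /vadd /scal; ring.
apply: Rle_trans (vnorm_add _ _) _.
rewrite !vnorm_scal !vnorm_ev !Rabs_right; lra.
Qed.

Lemma hess_sym d (F : vec d -> R) g H w : is_C2 F g H -> msym (H w).
Proof.
move=> HC a b.
apply: Rminus_diag_uniq. apply: eq0_of_small => eps Heps.
have [_ [_ Hc]] := HC.
have [dc [Hdc Hcb]] := Hc w (eps / 2) ltac:(lra).
set del := dc / 3.
have Hdel : 0 < del by rewrite /del; lra.
have [x1 [y1 [Hx1 [Hy1 E1]]]] := mixed w a b HC Hdel.
have [x2 [y2 [Hx2 [Hy2 E2]]]] := mixed w b a HC Hdel.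
rewrite Dmix_swap E2 in E1.
have Hd2 : del * del <> 0 by nra.
have E : H (Pst w a b x1 y1) a b = H (Pst w b a x2 y2) b a.
  exact: (Rmult_eq_reg_l (del * del) _ _ (esym E1) Hd2).
have N1 : vnorm (vsub (Pst w a b x1 y1) w) < dc.
  have := vnorm_Pst w a b (Rlt_le _ _ (proj1 Hx1)) (Rlt_le _ _ (proj1 Hy1)). rewrite /del in Hx1 Hy1. lra.
have N2 : vnorm (vsub (Pst w b a x2 y2) w) < dc.
  have := vnorm_Pst w b a (Rlt_le _ _ (proj1 Hx2)) (Rlt_le _ _ (proj1 Hy2)). rewrite /del in Hx2 Hy2. lra.
have C1 := Hcb _ N1 a b. have C2 := Hcb _ N2 b a.
rewrite E in C1.
have := Rabs_triang (H w a b - H (Pst w b a x2 y2) b a) (H (Pst w b a x2 y2) b a - H w b a).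
have -> : H w a b - H (Pst w b a x2 y2) b a + (H (Pst w b a x2 y2) b a - H w b a) = H w a b - H w b a by ring.
rewrite Rabs_minus_sym in C1.
lra.
Qed.

Lemma mvt_le (f f' : R -> R) B : (forall c, 0 <= c <= 1 -> derivable_pt_lim f c (f' c)) ->
  (forall c, 0 <= c <= 1 -> f' c <= B) -> f 1 - f 0 <= B.
Proof.
move=> Hd Hb. have [c [E Hc]] := MVT_cor2 f f' 0 1 Rlt_0_1 Hd.
rewrite E. have := Hb c ltac:(lra). lra.
Qed.
Lemma mvt_ge (f f' : R -> R) B : (forall c, 0 <= c <= 1 -> derivable_pt_lim f c (f' c)) ->
  (forall c, 0 <= c <= 1 -> B <= f' c) -> B <= f 1 - f 0.
Proof.
move=> Hd Hb. have [c [E Hc]] := MVT_cor2 f f' 0 1 Rlt_0_1 Hd.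
rewrite E. have := Hb c ltac:(lra). lra.
Qed.

Lemma line_0 d (w v : vec d) : line w v 0 = w.
Proof. apply: functional_extensionality => i; rewrite /line /vadd /scal; ring. Qed.
Lemma line_1 d (w z : vec d) : line w (vsub z w) 1 = z.
Proof. apply: functional_extensionality => i; rewrite /line /vadd /scal /vsub; ring. Qed.
Lemma line_sub d (w z : vec d) t : vsub (line w (vsub z w) t) z = scal (t - 1) (vsub z w).
Proof. apply: functional_extensionality => i; rewrite /line /vadd /scal /vsub; ring. Qed.

Lemma dot_avg N d (u : vec d) (X : 'I_N -> vec d) :
  dot u (fun a => avgN (fun i => X i a)) = avgN (fun i => dot u (X i)).
Proof.
rewrite /dot /avgN.
transitivity (rsum (fun a => / INR N * rsum (fun i => u a * X i a))).
  by apply: rsum_ext => a; rewrite -!rsum_scal; apply: rsum_ext => i; ring.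
by rewrite rsum_scal rsum_exchange.
Qed.

Lemma dot_avgl N d (u : vec d) (X : 'I_N -> vec d) :
  dot (fun a => avgN (fun i => X i a)) u = avgN (fun i => dot (X i) u).
Proof. rewrite dot_sym dot_avg /avgN; congr (_ * _); apply: rsum_ext => i; exact: dot_sym. Qed.

Lemma mv_hessR N d (HF : 'I_N -> vec d -> mat d) w v :
  mv (hessR HF w) v = fun a => avgN (fun i => mv (HF i w) v a).
Proof.
apply: functional_extensionality => a.
rewrite /mv /hessR /avgN.
transitivity (rsum (fun j => / INR N * rsum (fun i => HF i w a j * v j))).
  by apply: rsum_ext => j; rewrite Rmult_assoc -rsum_scalr -!rsum_scal; apply: rsum_ext => i; ring.
by rewrite rsum_scal rsum_exchange.
Qed.

Section Obj.
Variables (N d : nat) (F : 'I_N -> vec d -> R) (gF : 'I_N -> vec d -> vec d)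
  (HF : 'I_N -> vec d -> mat d).
Hypothesis HC2 : forall i, is_C2 (F i) (gF i) (HF i).

Lemma Robj_path w v s0 : derivable_pt_lim (fun s => Robj F (line w v s)) s0 (dot (gradR gF (line w v s0)) v).
Proof.
rewrite /gradR dot_avgl /Robj /avgN.
apply: dpl_scal. apply: (dpl_rsum (f := fun i s => F i (line w v s))) => i.
have [Hg _] := HC2 i. exact: grad_path.
Qed.

Lemma gradR_path u w v s0 : derivable_pt_lim (fun s => dot u (gradR gF (line w v s))) s0
   (dot u (mv (hessR HF (line w v s0)) v)).
Proof.
apply: (dpl_ext (f := fun s => avgN (fun i => dot u (gF i (line w v s))))).
  by move=> t; rewrite /gradR dot_avg.
rewrite mv_hessR dot_avg /avgN.
apply: dpl_scal. apply: (dpl_rsum (f := fun i s => dot u (gF i (line w v s)))) => i.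
have [_ [HJ _]] := HC2 i. exact: jac_path.
Qed.

Lemma hessR_sym w : msym (hessR HF w).
Proof.
move=> a b. rewrite /hessR /avgN; congr (_ * _); apply: rsum_ext => i.
exact: (hess_sym w (HC2 i)).
Qed.

Lemma HF_sym i w : msym (HF i w).
Proof. exact: (hess_sym w (HC2 i)). Qed.

Lemma grad_min wstar : (forall w, Robj F wstar <= Robj F w) -> forall a, gradR gF wstar a = 0.
Proof.
move=> Hm. set v := gradR gF wstar.
have H := Robj_path wstar v 0.
rewrite line_0 in H.
have H0 := deriv_min0 H.
have : dot v v = 0. apply: H0 => y. rewrite line_0. exact: Hm.
move=> Hd. apply: vnorm_eq0. by rewrite /vnorm Hd sqrt_0.
Qed.

Lemma grad_bound wstar L w : (forall a, gradR gF wstar a = 0) -> 0 <= L ->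
  (forall w x, 0 <= dot x (mv (hessR HF w) x) <= L * dot x x) ->
  vnorm (gradR gF w) <= L * vnorm (vsub w wstar).
Proof.
move=> Hg0 HL Hlw.
set e := vsub w wstar. set u := gradR gF w.
have Hd : forall c, 0 <= c <= 1 -> derivable_pt_lim (fun s => dot u (gradR gF (line wstar e s))) c
   (dot u (mv (hessR HF (line wstar e c)) e)).
  move=> c _; exact: gradR_path.
have Hb : forall c, 0 <= c <= 1 -> dot u (mv (hessR HF (line wstar e c)) e) <= vnorm u * (L * vnorm e).
  move=> c _. apply: Rle_trans (dot_le_norm _ _) _.
  apply: Rmult_le_compat_l; first exact: vnorm_ge0.
  apply: loewner_opnorm => //; exact: hessR_sym.
have := mvt_le Hd Hb.
rewrite line_0 /e line_1 -/u.
have -> : dot u (gradR gF wstar) = 0.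
  rewrite /dot -(rsum_zero d); apply: rsum_ext => i; rewrite Hg0; ring.
rewrite Rminus_0_r -vnorm_sq => H.
have Hu := vnorm_ge0 u. have He := vnorm_ge0 e.
rewrite -/e in H *. case: (Req_dec (vnorm u) 0) => Hu0; first by rewrite Hu0; nra.
apply: (Rmult_le_reg_l (vnorm u)); first lra. lra.
Qed.

End Obj.

Section Obj2.
Variables (N d : nat) (F : 'I_N -> vec d -> R) (gF : 'I_N -> vec d -> vec d)
  (HF : 'I_N -> vec d -> mat d).
Hypothesis HC2 : forall i, is_C2 (F i) (gF i) (HF i).

Lemma dot_zero_r (u v : vec d) : (forall a, v a = 0) -> dot u v = 0.
Proof. move=> H; rewrite /dot -(rsum_zero d); apply: rsum_ext => i; rewrite H; ring. Qed.

Lemma taylor_bound wstar M w : (forall a, gradR gF wstar a = 0) ->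
  (forall w z, opnorm_le (msub (hessR HF w) (hessR HF z)) (M * vnorm (vsub w z))) ->
  vnorm (vsub (gradR gF w) (mv (hessR HF w) (vsub w wstar))) <= M / 2 * (vnorm (vsub w wstar) * vnorm (vsub w wstar)).
Proof.
move=> Hg0 HA3.
set e := vsub w wstar.
set u := vsub (gradR gF w) (mv (hessR HF w) e).
set K := vnorm u * M * (vnorm e * vnorm e).
set q := dot u (mv (hessR HF w) e).
pose f t := dot u (gradR gF (line wstar e t)) + (K / 2 + (- (q + K)) * t + (K / 2) * (t * t)).
pose f' c := dot u (mv (hessR HF (line wstar e c)) e) + (- (q + K) + 2 * (K / 2) * c).
have Hd : forall c, 0 <= c <= 1 -> derivable_pt_lim f c (f' c).
  move=> c _; apply: dpl_plus; [exact: gradR_path | exact: dpl_quad].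
have Hb : forall c, 0 <= c <= 1 -> f' c <= 0.
  move=> c Hc. rewrite /f'.
  have E : dot u (mv (hessR HF (line wstar e c)) e) - q
      = dot u (mv (msub (hessR HF (line wstar e c)) (hessR HF w)) e) by rewrite mv_msub dot_subr.
  have H1 := dot_le_norm u (mv (msub (hessR HF (line wstar e c)) (hessR HF w)) e).
  have H2 := HA3 (line wstar e c) w e.
  rewrite /e line_sub -/e vnorm_scal Rabs_left1 in H2; last lra.
  have Hu := vnorm_ge0 u.
  have H3 : dot u (mv (hessR HF (line wstar e c)) e) - q <= K * (1 - c).
    rewrite E. apply: Rle_trans H1 _. 
    apply: Rle_trans (Rmult_le_compat_l _ _ _ Hu H2) _. rewrite /K. 
    right; ring.
  lra.
have := mvt_le Hd Hb.
rewrite /f line_0 /e line_1 -/e (dot_zero_r u Hg0).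
have Euu : dot u u = dot u (gradR gF w) - q by rewrite {2}/u dot_subr.
move=> H.
have Hdu : dot u u <= K / 2 by lra.
rewrite -vnorm_sq /K in Hdu.
have H0 : 0 <= M * (vnorm e * vnorm e).
  have := HA3 w wstar e. rewrite -/e => H4. have := vnorm_ge0 (mv (msub (hessR HF w) (hessR HF wstar)) e). nra.
have Hu := vnorm_ge0 u.
case: (Req_dec (vnorm u) 0) => Hu0; first by rewrite Hu0; nra.
apply: (Rmult_le_reg_l (vnorm u)); first lra. nra.
Qed.

Lemma strong_conv wstar mu w : (forall a, gradR gF wstar a = 0) ->
  (forall w x, mu * dot x x <= dot x (mv (hessR HF w) x)) ->
  mu * dot (vsub w wstar) (vsub w wstar) <= dot (vsub w wstar) (gradR gF w).
Proof.
move=> Hg0 Hl.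
set e := vsub w wstar.
have Hd : forall c, 0 <= c <= 1 -> derivable_pt_lim (fun s => dot e (gradR gF (line wstar e s))) c
   (dot e (mv (hessR HF (line wstar e c)) e)).
  move=> c _; exact: gradR_path.
have Hb : forall c, 0 <= c <= 1 -> mu * dot e e <= dot e (mv (hessR HF (line wstar e c)) e).
  move=> c _; exact: Hl.
have := mvt_ge Hd Hb.
rewrite line_0 /e line_1 -/e (dot_zero_r e Hg0). lra.
Qed.

End Obj2.

Definition tsum N b (X : b.-tuple 'I_N -> R) : R := \big[Rplus/0]_(S : b.-tuple 'I_N) X S.

Lemma tsum_ffun N b (X : b.-tuple 'I_N -> R) :
  tsum X = \big[Rplus/0]_(f : {ffun 'I_b -> 'I_N}) X [tuple f i | i < b].
Proof.
rewrite /tsum (reindex (fun f : {ffun 'I_b -> 'I_N} => [tuple f i | i < b])) //.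
apply: onW_bij. exists (fun t => [ffun i => tnth t i]) => f.
  by apply/ffunP => i; rewrite ffunE tnth_mktuple.
by apply: eq_from_tnth => i; rewrite tnth_mktuple ffunE.
Qed.

Lemma tsum_prod N b (G : 'I_b -> 'I_N -> R) :
  \big[Rplus/0]_(f : {ffun 'I_b -> 'I_N}) \big[Rmult/1]_i G i (f i) = \big[Rmult/1]_i rsum (G i).
Proof. rewrite /rsum; symmetry; exact: bigA_distr_bigA. Qed.

Lemma tsum_ext N b (X Y : b.-tuple 'I_N -> R) : (forall S, X S = Y S) -> tsum X = tsum Y.
Proof. move=> H; rewrite /tsum; apply: eq_bigr => S _; exact: H. Qed.

Lemma tsum_marg1 N b (h : 'I_N -> R) (j : 'I_b) :
  tsum (fun S => h (tnth S j)) = rsum h * \big[Rmult/1]_(i < b | i != j) rsum (fun _ : 'I_N => 1).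
Proof.
rewrite tsum_ffun.
transitivity (\big[Rplus/0]_(f : {ffun 'I_b -> 'I_N}) \big[Rmult/1]_i (if i == j then h (f i) else 1)).
  apply: eq_bigr => f _. rewrite tnth_mktuple (bigD1 j) //= eqxx big1 => [|i /negbTE -> //].
  by rewrite /GRing.mul /=; ring.
rewrite (tsum_prod (fun i x => if i == j then h x else 1)) (bigD1 j) //=.
congr (Rmult _ _).
  by apply: rsum_ext => x; rewrite eqxx.
apply: eq_bigr => i /negbTE Hi. by apply: rsum_ext => x; rewrite Hi.
Qed.

Lemma tsum_marg2 N b (f g : 'I_N -> R) (j l : 'I_b) : j != l -> rsum g = 0 ->
  tsum (fun S => f (tnth S j) * g (tnth S l)) = 0.
Proof.
move=> Hjl Hg. rewrite tsum_ffun.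
have Hlj : (l == j) = false by apply/negbTE; rewrite eq_sym.
transitivity (\big[Rplus/0]_(ff : {ffun 'I_b -> 'I_N}) \big[Rmult/1]_i
   (if i == j then f (ff i) else if i == l then g (ff i) else 1)).
  apply: eq_bigr => ff _. rewrite !tnth_mktuple (bigD1 j) //= eqxx (bigD1 l) /=; last by rewrite eq_sym.
  rewrite Hlj eqxx big1; first by rewrite /GRing.mul /=; ring.
  by move=> i /andP [/negbTE -> /negbTE ->].
rewrite (tsum_prod (fun i x => if i == j then f x else if i == l then g x else 1)) (bigD1 l) //=.
rewrite Hlj.
have -> : rsum (fun x : 'I_N => if l == l then g x else 1) = 0 by rewrite -Hg; apply: rsum_ext => x; rewrite eqxx.
by rewrite /GRing.mul /=; ring.
Qed.

Lemma tsum_one N b : tsum (fun _ : b.-tuple 'I_N => 1) = INR N ^ b.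
Proof.
rewrite tsum_ffun.
transitivity (\big[Rplus/0]_(ff : {ffun 'I_b -> 'I_N}) \big[Rmult/1]_(i < b) (1:R)).
  apply: eq_bigr => ff _. rewrite big1 //.
have E := tsum_prod (fun (_ : 'I_b) (_ : 'I_N) => 1).
transitivity (\big[Rmult/1]_(i < b) rsum (fun _ : 'I_N => 1)); first exact: E.
rewrite (eq_bigr (fun _ => INR N)); last by move=> i _; rewrite rsum_const Rmult_1_r.
rewrite big_const_ord. clear E.
elim: b => [|b IH] //=. rewrite IH. done.
Qed.

Lemma tsum_add N b (X Y : b.-tuple 'I_N -> R) : tsum (fun S => X S + Y S) = tsum X + tsum Y.
Proof. rewrite /tsum. exact: big_split. Qed.
Lemma tsum_scal N b c (X : b.-tuple 'I_N -> R) : tsum (fun S => c * X S) = c * tsum X.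
Proof. rewrite /tsum. by rewrite -mulr_sumr. Qed.
Lemma tsum_le N b (X Y : b.-tuple 'I_N -> R) : (forall S, X S <= Y S) -> tsum X <= tsum Y.
Proof. move=> H; rewrite /tsum; apply/RleP; apply: ler_sum => i _; apply/RleP; exact: H. Qed.
Lemma tsum_rsum N b n (X : 'I_n -> b.-tuple 'I_N -> R) :
  tsum (fun S => rsum (fun a => X a S)) = rsum (fun a => tsum (X a)).
Proof. rewrite /tsum /rsum. exact: exchange_big. Qed.

Section SE.
Variables (N b : nat).
Hypothesis HN : (0 < N)%nat.
Hypothesis Hb : (0 < b)%nat.

Lemma INR_N_pos : 0 < INR N.
Proof. apply: lt_0_INR. by apply/ltP. Qed.

Lemma se_add (X Y : b.-tuple 'I_N -> R) : sample_exp (fun S => X S + Y S) = sample_exp X + sample_exp Y.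
Proof. rewrite /sample_exp. have := tsum_add X Y. rewrite /tsum => ->. ring. Qed.
Lemma se_scal c (X : b.-tuple 'I_N -> R) : sample_exp (fun S => c * X S) = c * sample_exp X.
Proof. rewrite /sample_exp. have := tsum_scal c X. rewrite /tsum => ->. ring. Qed.
Lemma se_ext (X Y : b.-tuple 'I_N -> R) : (forall S, X S = Y S) -> sample_exp X = sample_exp Y.
Proof. move=> H; rewrite /sample_exp. have := tsum_ext H. rewrite /tsum => ->. done. Qed.
Lemma se_le (X Y : b.-tuple 'I_N -> R) : (forall S, X S <= Y S) -> sample_exp X <= sample_exp Y.
Proof.
move=> H; rewrite /sample_exp. have := tsum_le H. rewrite /tsum => H1.
apply: Rmult_le_compat_l => //. left; apply: Rinv_0_lt_compat; apply: pow_lt; exact: INR_N_pos.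
Qed.
Lemma se_rsum n (X : 'I_n -> b.-tuple 'I_N -> R) :
  sample_exp (fun S => rsum (fun a => X a S)) = rsum (fun a => sample_exp (X a)).
Proof. rewrite /sample_exp. have := tsum_rsum X. rewrite /tsum => ->. by rewrite -rsum_scal. Qed.
Lemma se_one : sample_exp (fun _ : b.-tuple 'I_N => 1) = 1.
Proof. rewrite /sample_exp. have := tsum_one N b. rewrite /tsum => ->.
apply: Rinv_l. apply: pow_nonzero. have := INR_N_pos. lra. Qed.
Lemma se_const c : sample_exp (fun _ : b.-tuple 'I_N => c) = c.
Proof. have E := se_scal c (fun _ : b.-tuple 'I_N => 1). rewrite se_one in E.
rewrite (@se_ext _ (fun _ => c * 1)); first by rewrite E; ring. move=> S; ring. Qed.

Lemma se_marg1 (h : 'I_N -> R) (j : 'I_b) : sample_exp (fun S => h (tnth S j)) = avgN h.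
Proof.
have H1 := tsum_marg1 h j.
set C := \big[Rmult/1]_(i < b | i != j) rsum (fun _ : 'I_N => 1) in H1.
have H2 : tsum (fun _ : b.-tuple 'I_N => 1) = rsum (fun _ : 'I_N => 1) * C := tsum_marg1 (fun _ => 1) j.
rewrite tsum_one rsum_const Rmult_1_r in H2.
rewrite /sample_exp /avgN. move: H1; rewrite /tsum => ->.
have HNp := INR_N_pos.
have Hp : INR N ^ b <> 0 by apply: pow_nonzero; lra.
rewrite H2. field. split; first lra. move=> HC. apply: Hp. by rewrite H2 HC; ring.
Qed.

Lemma se_marg2 (f g : 'I_N -> R) (j l : 'I_b) : j != l -> rsum g = 0 ->
  sample_exp (fun S => f (tnth S j) * g (tnth S l)) = 0.
Proof. move=> H1 H2. rewrite /sample_exp. have := tsum_marg2 f H1 H2. rewrite /tsum => ->. ring. Qed.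

Lemma se_jensen (X : b.-tuple 'I_N -> R) : sample_exp X <= sqrt (sample_exp (fun S => X S * X S)).
Proof.
set m := sample_exp X.
have H : 0 <= sample_exp (fun S => (X S - m) * (X S - m)).
  have := @se_le (fun _ => 0) (fun S => (X S - m) * (X S - m)) ltac:(move=> S /=; exact: (Rle_0_sqr _)).
  by rewrite se_const.
have E : sample_exp (fun S => (X S - m) * (X S - m)) =
   sample_exp (fun S => X S * X S) + (-2 * m) * sample_exp X + m * m * sample_exp (fun _ : b.-tuple 'I_N => 1).
  rewrite -se_scal -se_scal -!se_add. apply: se_ext => S; ring.
rewrite se_one -/m in E.
apply: Rle_trans (Rle_abs m) _. rewrite -sqrt_Rsqr_abs. apply: sqrt_le_1_alt. rewrite /Rsqr. nra.
Qed.

End SE.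

Lemma avgN_ext N (f g : 'I_N -> R) : (forall i, f i = g i) -> avgN f = avgN g.
Proof. move=> H; rewrite /avgN (rsum_ext H) //. Qed.

Lemma mv_avg N d (A : 'I_N -> mat d) v :
  mv (fun a b => avgN (fun i => A i a b)) v = fun a => avgN (fun i => mv (A i) v a).
Proof.
apply: functional_extensionality => a.
rewrite /mv /avgN.
transitivity (rsum (fun j => / INR N * rsum (fun i => A i a j * v j))).
  by apply: rsum_ext => j; rewrite Rmult_assoc -rsum_scalr -!rsum_scal; apply: rsum_ext => i; ring.
by rewrite rsum_scal rsum_exchange.
Qed.

Lemma mv_mmul d (A B : mat d) v : mv (mmul A B) v = mv A (mv B v).
Proof.
apply: functional_extensionality => i. rewrite /mv /mmul.
transitivity (rsum (fun k => rsum (fun j => A i j * B j k * v k))).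
  by apply: rsum_ext => k; rewrite -rsum_scalr.
rewrite rsum_exchange; apply: rsum_ext => j; rewrite -rsum_scal; apply: rsum_ext => k; ring.
Qed.

Lemma vnorm_vsub_sym d (u v : vec d) : vnorm (vsub u v) = vnorm (vsub v u).
Proof.
have -> : vsub v u = scal (-1) (vsub u v).
  apply: functional_extensionality => i; rewrite /vsub /scal; ring.
rewrite vnorm_scal Rabs_Ropp Rabs_R1; ring.
Qed.

Lemma INR_pos_nat n : (0 < n)%nat -> 0 < INR n.
Proof. move=> H; apply: lt_0_INR; by apply/ltP. Qed.

Section Var.
Variables (N d b : nat) (HF : 'I_N -> vec d -> mat d) (w e : vec d) (sigma : R).
Hypothesis HN : (0 < N)%nat.
Hypothesis Hb : (0 < b)%nat.
Hypothesis Hsym : forall i, msym (HF i w).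
Hypothesis Hsigma : 0 <= sigma.
Hypothesis HA4 : opnorm_le (hess_var HF w) (sigma ^ 2).

Let Y i := mv (msub (HF i w) (hessR HF w)) e.
Let Z (S : b.-tuple 'I_N) := vsub (mv (hessS HF S w) e) (mv (hessR HF w) e).

Lemma Z_eq S a : Z S a = / INR b * rsum (fun j => Y (tnth S j) a).
Proof.
have Hbp := INR_pos_nat Hb.
rewrite /Z /Y /vsub. rewrite (rsum_ext (g := fun j => mv (HF (tnth S j) w) e a - mv (hessR HF w) e a)); last first.
  by move=> j; rewrite mv_msub.
rewrite rsum_sub rsum_const.
have -> : mv (hessS HF S w) e a = / INR b * rsum (fun j => mv (HF (tnth S j) w) e a).
  rewrite /mv /hessS.
  transitivity (rsum (fun k => rsum (fun j => / INR b * (HF (tnth S j) w a k * e k)))).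
    apply: rsum_ext => k. rewrite Rmult_assoc -rsum_scalr -rsum_scal. done.
  rewrite rsum_exchange -rsum_scal; apply: rsum_ext => j; rewrite -rsum_scal. done.
field. lra.
Qed.

Lemma sumY0 a : rsum (fun i => Y i a) = 0.
Proof.
have HNp := INR_pos_nat HN.
rewrite /Y. rewrite (rsum_ext (g := fun i => mv (HF i w) e a - mv (hessR HF w) e a)); last first.
  by move=> i; rewrite mv_msub.
rewrite rsum_sub rsum_const mv_hessR /avgN. field. lra.
Qed.

Lemma dotY i : dot (Y i) (Y i) = dot e (mv (mmul (msub (HF i w) (hessR HF w)) (msub (HF i w) (hessR HF w))) e).
Proof.
rewrite mv_mmul /Y. apply: dot_mv_sym.
move=> a c. rewrite /msub Hsym. congr (_ - _).
rewrite /hessR /avgN; congr (_ * _); apply: rsum_ext => i0; exact: Hsym.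
Qed.

Lemma EZ2 : sample_exp (fun S => dot (Z S) (Z S)) = / INR b * avgN (fun i => dot (Y i) (Y i)).
Proof.
have Hbp := INR_pos_nat Hb.
have E1 : forall S, dot (Z S) (Z S) = rsum (fun a => rsum (fun j => rsum (fun l =>
     (/ INR b * / INR b) * (Y (tnth S j) a * Y (tnth S l) a)))).
  move=> S. rewrite /dot. apply: rsum_ext => a. rewrite Z_eq.
  transitivity ((/ INR b * / INR b) * (rsum (fun j => Y (tnth S j) a) * rsum (fun j => Y (tnth S j) a))); first ring.
  rewrite -rsum_scalr -rsum_scal. apply: rsum_ext => j. rewrite -rsum_scal -rsum_scal. apply: rsum_ext => l. ring.
rewrite (se_ext (Y := fun S => rsum (fun a => rsum (fun j => rsum (fun l =>
     (/ INR b * / INR b) * (Y (tnth S j) a * Y (tnth S l) a)))))); last exact: E1.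
rewrite se_rsum //.
transitivity (rsum (fun a => rsum (fun j : 'I_b => (/ INR b * / INR b) * avgN (fun i => Y i a * Y i a)))).
  apply: rsum_ext => a. rewrite se_rsum //. apply: rsum_ext => j. rewrite se_rsum //.
  rewrite /rsum (bigD1 j) //= big1.
    rewrite se_scal (se_marg1 HN (fun i => Y i a * Y i a) j). rewrite /GRing.add /=. ring.
  move=> l Hl. rewrite se_scal (se_marg2 (fun i => Y i a) _ (sumY0 a)); first ring. by rewrite eq_sym.
rewrite (rsum_ext (g := fun a => / INR b * avgN (fun i => Y i a * Y i a))); last first.
  move=> a; rewrite rsum_const. field. lra.
rewrite rsum_scal /avgN. rewrite rsum_scal rsum_exchange. done.
Qed.

Lemma var_bound : sample_exp (fun S => vnorm (Z S)) <= sigma / sqrt (INR b) * vnorm e.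
Proof.
have Hbp := INR_pos_nat Hb.
apply: Rle_trans (se_jensen HN _) _.
rewrite (se_ext (Y := fun S => dot (Z S) (Z S))); last by move=> S; rewrite vnorm_sq.
rewrite EZ2.
have HV : avgN (fun i => dot (Y i) (Y i)) <= sigma ^ 2 * (vnorm e * vnorm e).
  rewrite (@avgN_ext N _ (fun i => dot e (mv (mmul (msub (HF i w) (hessR HF w)) (msub (HF i w) (hessR HF w))) e))); last exact: dotY.
  rewrite -dot_avg -mv_avg.
  apply: Rle_trans (dot_le_norm _ _) _.
  have := HA4 e. have := vnorm_ge0 e. rewrite /hess_var. nra.
have Hsb : 0 < sqrt (INR b) := sqrt_lt_R0 _ Hbp.
apply: sqrt_le_of_sq.
  apply: Rmult_le_pos; last exact: vnorm_ge0. apply: Rmult_le_pos => //. left; exact: Rinv_0_lt_compat.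
have -> : sigma / sqrt (INR b) * vnorm e * (sigma / sqrt (INR b) * vnorm e)
   = / (sqrt (INR b) * sqrt (INR b)) * (sigma ^ 2 * (vnorm e * vnorm e)) by field; lra.
rewrite sqrt_sqrt; last lra.
apply: Rmult_le_compat_l => //. left; exact: Rinv_0_lt_compat.
Qed.

End Var.

Lemma part1 N d b (F : 'I_N -> vec d -> R) (gF : 'I_N -> vec d -> vec d) (HF : 'I_N -> vec d -> mat d)
  (mub L M sigma zeta mu : R) (wstar w : vec d) (p : b.-tuple 'I_N -> vec d) :
  (0 < N)%nat -> (0 < b)%nat -> (forall i, is_C2 (F i) (gF i) (HF i)) ->
  (forall a, gradR gF wstar a = 0) ->
  0 < mub -> (forall (S : b.-tuple 'I_N) x, mub * dot x x <= dot x (mv (hessS HF S w) x)) ->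
  0 < mu -> 0 <= L -> (forall w x, mu * dot x x <= dot x (mv (hessR HF w) x) <= L * dot x x) ->
  (forall w z, opnorm_le (msub (hessR HF w) (hessR HF z)) (M * vnorm (vsub w z))) ->
  0 <= sigma -> (forall w, opnorm_le (hess_var HF w) (sigma ^ 2)) ->
  (forall S, vnorm (vadd (mv (hessS HF S w) (p S)) (gradR gF w)) <= zeta * vnorm (gradR gF w)) ->
  sample_exp (fun S => vnorm (vsub (vadd w (p S)) wstar))
     <= M / (2 * mub) * vnorm (vsub w wstar) ^ 2
        + (sigma / (mub * sqrt (INR b)) + L * zeta / mub) * vnorm (vsub w wstar).
Proof.
move=> HN Hb HC2 Hg0 Hmub HS Hmu HL HR HA3 Hsig HA4 Hres.
set e := vsub w wstar. set g := gradR gF w. set He := mv (hessR HF w) e.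
set ne := vnorm e.
have Hne : 0 <= ne := vnorm_ge0 e.
have HR0 : forall w x, 0 <= dot x (mv (hessR HF w) x) <= L * dot x x.
  move=> w0 x; have := HR w0 x; have := dot_ge0 x; nra.
have Hr : forall S, vnorm (vadd (mv (hessS HF S w) (p S)) g) <= zeta * L * ne.
  move=> S. have H1 := Hres S. rewrite -/g in H1.
  have Hg := vnorm_ge0 g. have Hr0 := vnorm_ge0 (vadd (mv (hessS HF S w) (p S)) g).
  case: (Rle_lt_dec 0 zeta) => Hz.
    have := grad_bound HC2 w Hg0 HL HR0. rewrite -/e -/g -/ne => H2. nra.
  have Hg0' : vnorm g = 0 by nra.
  have H3 := strong_conv HC2 w Hg0 (fun w x => proj1 (HR w x)).
  rewrite -/e -/g in H3. have H4 := dot_le_norm e g. rewrite Hg0' in H4.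
  have Hee : dot e e = 0 by have := dot_ge0 e; nra.
  have : ne = 0 by rewrite /ne /vnorm Hee sqrt_0.
  move=> ->. nra.
have Ht : vnorm (vsub He g) <= M / 2 * (ne * ne).
  rewrite vnorm_vsub_sym. exact: (taylor_bound HC2 w Hg0 HA3).
set Z := fun S : b.-tuple 'I_N => vsub (mv (hessS HF S w) e) He.
have Hpt : forall S, vnorm (vsub (vadd w (p S)) wstar) <= / mub * (vnorm (Z S) + (M / 2 * (ne * ne) + zeta * L * ne)).
  move=> S. set A := hessS HF S w.
  have EA : mv A (vsub (vadd w (p S)) wstar) = vadd (vadd (Z S) (vsub He g)) (vadd (mv A (p S)) g).
    rewrite vsub_vadd_eq mv_vadd -/e. apply: functional_extensionality => a.
    rewrite /Z /vadd /vsub -/A. ring.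
  have H1 := loewner_lower (vsub (vadd w (p S)) wstar) (HS S).
  rewrite -/A EA in H1.
  have H2 := vnorm_add (vadd (Z S) (vsub He g)) (vadd (mv A (p S)) g).
  have H3 := vnorm_add (Z S) (vsub He g).
  have H4 := Hr S. rewrite -/A in H4.
  apply: (Rmult_le_reg_l mub) => //.
  rewrite -Rmult_assoc Rinv_r; last lra. lra.
apply: Rle_trans (se_le HN Hpt) _.
rewrite se_scal se_add se_const.
have HV := var_bound e HN Hb (fun i => HF_sym HC2 i w) Hsig (HA4 w).
rewrite -/He -/e -/ne in HV. rewrite -/Z in HV.
have Hsb : 0 < sqrt (INR b) := sqrt_lt_R0 _ (INR_pos_nat Hb).
have Hinv : 0 < / mub by apply: Rinv_0_lt_compat.
apply: Rle_trans (Rmult_le_compat_l _ _ _ (Rlt_le _ _ Hinv) (Rplus_le_compat_r _ _ _ HV)) _.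
right. field. lra. exact: HN.
Qed.

Section FE.
Variables (N b : nat).
Hypothesis HN : (0 < N)%nat.

Lemma fe_ext k (X Y : seq (b.-tuple 'I_N) -> R) : (forall h, X h = Y h) -> full_exp k X = full_exp k Y.
Proof.
elim: k X Y => [|k IH] X Y H /=; first exact: H.
apply: IH => h. apply: se_ext => S. exact: H.
Qed.

Lemma fe_le k (X Y : seq (b.-tuple 'I_N) -> R) : (forall h, X h <= Y h) -> full_exp k X <= full_exp k Y.
Proof.
elim: k X Y => [|k IH] X Y H /=; first exact: H.
apply: IH => h. apply: se_le => // S.
Qed.

Lemma fe_add k (X Y : seq (b.-tuple 'I_N) -> R) : full_exp k (fun h => X h + Y h) = full_exp k X + full_exp k Y.
Proof.
elim: k X Y => [|k IH] X Y //=.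
rewrite -IH. apply: fe_ext => h. exact: se_add.
Qed.

Lemma fe_scal k c (X : seq (b.-tuple 'I_N) -> R) : full_exp k (fun h => c * X h) = c * full_exp k X.
Proof.
elim: k X => [|k IH] X //=.
rewrite -IH. apply: fe_ext => h. exact: se_scal.
Qed.

Lemma fe_ge0 k (X : seq (b.-tuple 'I_N) -> R) : (forall h, 0 <= X h) -> 0 <= full_exp k X.
Proof.
move=> H. have := @fe_le k (fun h => 0 * X h) X ltac:(move=> h /=; have := H h; lra).
rewrite fe_scal. lra.
Qed.

End FE.

Lemma div_le_of c a b : 0 < c -> a <= b * c -> a / c <= b.
Proof. move=> Hc H. apply: (Rmult_le_reg_r c) => //. rewrite /Rdiv Rmult_assoc Rinv_l; lra. Qed.

Lemma step_half (e0 ek ek1 Ex2 C1 C2 gamma : R) :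
  0 <= ek -> ek <= e0 -> 0 <= Ex2 -> 0 < gamma -> Ex2 <= gamma * ek ^ 2 ->
  C2 <= / 4 -> 4 * gamma * C1 * e0 <= 1 ->
  ek1 <= C1 * Ex2 + C2 * ek -> ek1 <= / 2 * ek.
Proof.
move=> Hek Hle HE Hg HB HC2 HC1 H.
case: (Rle_lt_dec 0 C1) => Hc.
- have H1 : C1 * Ex2 <= C1 * (gamma * ek ^ 2) by apply: Rmult_le_compat_l.
  have H2 : C1 * gamma * ek <= C1 * gamma * e0 by apply: Rmult_le_compat_l; nra.
  have H3 : C1 * (gamma * ek ^ 2) = (C1 * gamma * ek) * ek by ring.
  have H4 : (C1 * gamma * ek) * ek <= / 4 * ek by apply: Rmult_le_compat_r => //; lra.
  have H5 : C2 * ek <= / 4 * ek by apply: Rmult_le_compat_r.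
  lra.
- have H1 : C1 * Ex2 <= 0 by nra.
  have H5 : C2 * ek <= / 4 * ek by apply: Rmult_le_compat_r.
  lra.
Qed.

Unset Implicit Arguments.

Theorem mainTheorem7
  (N d beta : nat)
  (F : 'I_N -> vec d -> R) (gF : 'I_N -> vec d -> vec d)
  (HF : 'I_N -> vec d -> mat d)
  (mu_b L_b : nat -> R) (mubar Lbar mu L M sigma zeta : R) (wstar : vec d)
  (* finite sum, each F_i twice continuously differentiable *)
  (HN : (0 < N)%nat)
  (HC2 : forall i, is_C2 (F i) (gF i) (HF i))
  (* w* is the unique minimizer of R *)
  (Hmin : forall w, Robj F wstar <= Robj F w)
  (Huniq : forall w', (forall w, Robj F w' <= Robj F w) -> w' = wstar)
  (* Assumption A1 *)
  (HA1b : forall b : nat, (0 < b)%nat ->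
     0 < mu_b b <= L_b b /\
     forall (S : b.-tuple 'I_N) (w : vec d),
       loewner_between (mu_b b) (L_b b) (hessS HF S w))
  (HA1bar : 0 < mubar /\
     forall b : nat, (0 < b)%nat -> mubar <= mu_b b /\ L_b b <= Lbar)
  (HA1 : 0 < mu <= L /\ forall w, loewner_between mu L (hessR HF w))
  (* Assumption A3 *)
  (HA3 : forall w z, opnorm_le (msub (hessR HF w) (hessR HF z)) (M * vnorm (vsub w z)))
  (* Assumption A4 *)
  (Hsigma : 0 <= sigma)
  (HA4 : forall w, opnorm_le (hess_var HF w) (sigma ^ 2))
  (* sample size and forcing parameter *)
  (Hbeta : (0 < beta)%nat)
  (Hzeta : zeta < 1) :
  (* one-step bound in conditional expectation *)
  (forall (w : vec d) (p : beta.-tuple 'I_N -> vec d),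
     (forall S, vnorm (vadd (mv (hessS HF S w) (p S)) (gradR gF w))
                <= zeta * vnorm (gradR gF w)) ->
     sample_exp (fun S => vnorm (vsub (vadd w (p S)) wstar))
     <= M / (2 * mu_b beta) * vnorm (vsub w wstar) ^ 2
        + (sigma / (mu_b beta * sqrt (INR beta)) + L * zeta / mu_b beta)
          * vnorm (vsub w wstar))
  /\
  (* linear convergence in expectation under B1 *)
  (forall (w0 : vec d)
          (p : seq (beta.-tuple 'I_N) -> beta.-tuple 'I_N -> vec d)
          (gamma : R),
     (forall h S,
        vnorm (vadd (mv (hessS HF S (iterate w0 p h)) (p h S))
                    (gradR gF (iterate w0 p h)))
        <= zeta * vnorm (gradR gF (iterate w0 p h))) ->
     0 < gamma ->
     (forall k : nat,
        full_exp k (fun h => vnorm (vsub (iterate w0 p h) wstar) ^ 2)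
        <= gamma * (full_exp k (fun h => vnorm (vsub (iterate w0 p h) wstar))) ^ 2) ->
     64 * sigma ^ 2 / mubar ^ 2 <= INR beta ->
     zeta <= mu_b beta / (8 * L) ->
     4 * (M / (2 * mu_b beta)) * vnorm (vsub w0 wstar) <= 1 ->
     4 * gamma * (M / (2 * mu_b beta)) * vnorm (vsub w0 wstar) <= 1 ->
     forall k : nat,
       full_exp k.+1 (fun h => vnorm (vsub (iterate w0 p h) wstar))
       <= / 2 * full_exp k (fun h => vnorm (vsub (iterate w0 p h) wstar))).
Proof.
have Hg0 := grad_min HC2 Hmin.
have [Hmub HS] := HA1b beta Hbeta.
have [[Hmu HmuL] HR] := HA1.
have HL : 0 <= L by lra.
have P1 : forall (w : vec d) (p : beta.-tuple 'I_N -> vec d),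
     (forall S, vnorm (vadd (mv (hessS HF S w) (p S)) (gradR gF w))
                <= zeta * vnorm (gradR gF w)) ->
     sample_exp (fun S => vnorm (vsub (vadd w (p S)) wstar))
     <= M / (2 * mu_b beta) * vnorm (vsub w wstar) ^ 2
        + (sigma / (mu_b beta * sqrt (INR beta)) + L * zeta / mu_b beta)
          * vnorm (vsub w wstar).
  move=> w p Hres.
  apply: (part1 HN Hbeta HC2 Hg0 (proj1 Hmub) (fun S x => proj1 (HS S w x)) Hmu HL (fun w x => HR w x) HA3 Hsigma HA4 Hres).
split; first exact: P1.
move=> w0 p gamma Hres Hgam HB1 Hb64 Hz H4a H4b.
set mub := mu_b beta.
set C1 := M / (2 * mub).
set C2 := sigma / (mub * sqrt (INR beta)) + L * zeta / mub.
have Hmubp : 0 < mub by rewrite /mub; lra.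
have Hmubar : mubar <= mub := proj1 ((proj2 HA1bar) beta Hbeta).
have Hmubar0 : 0 < mubar := proj1 HA1bar.
have Hbp : 0 < INR beta := INR_pos_nat Hbeta.
have Hsb : 0 < sqrt (INR beta) := sqrt_lt_R0 _ Hbp.
have HC2b : C2 <= / 4.
  have H8 : 8 * sigma <= sqrt (INR beta) * mubar.
    have E : sqrt (INR beta) * mubar * (sqrt (INR beta) * mubar) = INR beta * (mubar * mubar).
      transitivity (sqrt (INR beta) * sqrt (INR beta) * (mubar * mubar)); first ring.
      rewrite sqrt_sqrt //; lra.
    have H64 : 64 * (sigma * sigma) <= INR beta * (mubar * mubar).
      have E2 : 64 * sigma ^ 2 / mubar ^ 2 * (mubar * mubar) = 64 * (sigma * sigma) by field; lra.
      rewrite -E2. apply: Rmult_le_compat_r => //; nra.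
    have : 0 <= sqrt (INR beta) * mubar by nra.
    nra.
  have T1 : sigma / (mub * sqrt (INR beta)) <= / 8.
    apply: (@div_le_of (mub * sqrt (INR beta)) _ _); first nra. nra.
  have T2 : L * zeta / mub <= / 8.
    apply: div_le_of => //.
    have HLp : 0 < L by lra.
    have : L * zeta <= L * (mub / (8 * L)) by apply: Rmult_le_compat_l; [lra | exact: Hz].
    have -> : L * (mub / (8 * L)) = / 8 * mub by field; lra.
    done.
  rewrite /C2; lra.
set ek := fun k => full_exp k (fun h => vnorm (vsub (iterate w0 p h) wstar)).
have Hek0 : forall k, 0 <= ek k.
  move=> k; apply: (fe_ge0 HN) => h; exact: vnorm_ge0.
have Hstep : forall k, ek k.+1 <= C1 * full_exp k (fun h => vnorm (vsub (iterate w0 p h) wstar) ^ 2) + C2 * ek k.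
  move=> k. rewrite /ek /=.
  apply: (Rle_trans _ (full_exp k (fun h => C1 * vnorm (vsub (iterate w0 p h) wstar) ^ 2 + C2 * vnorm (vsub (iterate w0 p h) wstar)))).
    apply: (fe_le HN) => h. exact: (P1 _ _ (Hres h)).
  rewrite fe_add fe_scal fe_scal. by apply: Rle_refl.
have Hhalf : forall k, ek k <= vnorm (vsub w0 wstar) -> ek k.+1 <= / 2 * ek k.
  move=> k Hk.
  apply: (step_half (e0 := vnorm (vsub w0 wstar)) (Ex2 := full_exp k (fun h => vnorm (vsub (iterate w0 p h) wstar) ^ 2)) (C1 := C1) (C2 := C2) (gamma := gamma)).
  - exact: Hek0.
  - exact: Hk.
  - apply: (fe_ge0 HN) => h. have := vnorm_ge0 (vsub (iterate w0 p h) wstar). nra.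
  - exact: Hgam.
  - rewrite /ek; exact: HB1.
  - exact: HC2b.
  - rewrite /C1 /mub; exact: H4b.
  - exact: Hstep.
have Hall : forall k, ek k <= vnorm (vsub w0 wstar).
  elim=> [|k IH]; first by rewrite /ek /=; apply: Rle_refl.
  have := Hhalf k IH. have := Hek0 k. lra.
move=> k. exact: (Hhalf k (Hall k)).
Qed.
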